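(* Let $\Sigma=(\mathbb{N}_0,X,U,\mathscr{U},\phi)$ be a control system as in the standing setup and let $Q\subset X$ be a nonempty compact set. Then $Q$ is finitely equi-invariant if and only if $Q$ has bounded invariance complexity.
   Context: Standing setup: $(X,d)$ is a metric space, $U$ is a compact metric space, and $F:X\times U\to X$ is a map such that $F_u:=F(\cdot,u)$ is continuous for every $u\in U$. Let $\mathscr U=U^{\mathbb N_0}$ with the product topology. For $\omega=(\omega_0,\omega_1,\dots)\in\mathscr U$, $x\in X$, set $\phi(0,x,\omega)=x$ and $\phi(k,x,\omega)=F_{\omega_{k-1}}\circ\cdots\circ F_{\omega_0}(x)$ for $k\ge1$. It is assumed that $\phi:\mathbb N_0\times X\times\mathscr U\to X$ is continuous. Notation: $\mathbb N=\{1,2,\dots\}$, $\mathbb N_0=\{0,1,2,\dots\}$; $B(x,\delta)$ is the open ball; $d(y,Q)=\inf_{q\in Q}d(y,q)$; $B_\varepsilon(Q)=\{y\in X:d(y,Q)<\varepsilon\}$; for $A\subset\mathbb N_0$, $\phi(A,x,\omega)=\{\phi(k,x,\omega):k\in A\}$. Finite equi-invariance: a point $x\in Q$ is a finitely equi-invariant point of $Q$ if for every $\varepsilon>0$ there exist $\delta>0$ and a finite set $F\subset\mathscr U$ such that for every $y\in B(x,\delta)\cap Q$ there is $\omega\in F$ with $\phi(\mathbb N_0,y,\omega)\subset B_\varepsilon(Q)$. $Q$ is finitely equi-invariant if every point of $Q$ is a finitely equi-invariant point of $Q$. Invariance complexity: for $\omega\in\mathscr U$, $n\in\mathbb N$,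 $\varepsilon>0$ let $Q^\varepsilon_{n,\omega}=\{x\in Q:\phi(\{0,1,\dots,n-1\},x,\omega)\subset B_\varepsilon(Q)\}$. A set $F\subset\mathscr U$ is $(n,\varepsilon,Q)$-spanning if $Q=\bigcup_{\omega\in F}Q^\varepsilon_{n,\omega}$, and $r_{inv}(n,\varepsilon,Q)$ is the minimal cardinality of an $(n,\varepsilon,Q)$-spanning set ($=\infty$ if none exists). $Q$ has bounded invariance complexity if for every $\varepsilon>0$ there is $C>0$ with $r_{inv}(n,\varepsilon,Q)\le C$ for all $n\in\mathbb N$. *)

(* Defs.v *)
From HB Require Import structures.
From mathcomp Require Import all_boot all_order all_algebra.
From mathcomp Require Import all_classical all_reals all_analysis.
Set Implicit Arguments. Unset Strict Implicit. Unset Printing Implicit Defensive.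
Import Order.TTheory GRing.Theory Num.Theory.
Local Open Scope classical_set_scope.
Local Open Scope ring_scope.

Section ControlSystem.
Context {R : realType} {X U : metricType R}.

Fixpoint phi (F : X -> U -> X) (k : nat) (x : X) (w : nat -> U) : X :=
  match k with
  | O => x
  | S k' => F (phi F k' x w) (w k')
  end.

(* B_eps(Q) = {y | d(y,Q) < eps}; d(y,Q) < eps iff some q in Q has d(y,q) < eps *)
Definition Beps (eps : R) (Q : set X) : set X :=
  [set y | exists2 q, Q q & mdist y q < eps].

Definition fin_equi_inv_point (F : X -> U -> X) (Q : set X) (x : X) : Prop :=
  Q x /\
  forall eps : R, 0 < eps ->
  exists delta : R, 0 < delta /\
  exists Fs : set (nat -> U), finite_set Fs /\
  forall y : X, mdist x y < delta -> Q y ->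
    exists2 w, Fs w & forall k : nat, Beps eps Q (phi F k y w).

Definition fin_equi_inv (F : X -> U -> X) (Q : set X) : Prop :=
  forall x, Q x -> fin_equi_inv_point F Q x.

Definition Qnw (F : X -> U -> X) (Q : set X) (n : nat) (eps : R) (w : nat -> U)
  : set X :=
  [set x | Q x /\ forall k : nat, (k < n)%N -> Beps eps Q (phi F k x w)].

Definition spanning (F : X -> U -> X) (n : nat) (eps : R) (Q : set X)
  (S : set (nat -> U)) : Prop :=
  Q = \bigcup_(w in S) Qnw F Q n eps w.

(* r_inv(n,eps,Q) <= C  iff  some (n,eps,Q)-spanning set has at most C elements *)
Definition rinv_le (F : X -> U -> X) (n : nat) (eps : R) (Q : set X) (C : nat)
  : Prop :=
  exists S : set (nat -> U), spanning F n eps Q S /\ (S #<= `I_C)%card.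

Definition bounded_inv_complexity (F : X -> U -> X) (Q : set X) : Prop :=
  forall eps : R, 0 < eps ->
  exists C : nat, forall n : nat, (0 < n)%N -> rinv_le F n eps Q C.

End ControlSystem.

(* Main.v *)
Require Import Defs.
From HB Require Import structures.
From mathcomp Require Import all_boot all_order all_algebra.
From mathcomp Require Import all_classical all_reals all_analysis.
From mathcomp Require Import finmap.
Import Order.TTheory GRing.Theory Num.Theory.
Local Open Scope classical_set_scope.
Local Open Scope ring_scope.

Section PAlias.
Context (T : topologicalType) (a : T).
Definition pal : Type := T.
HB.instance Definition _ := Topological.on pal.
HB.instance Definition _ := isPointed.Build pal a.
Lemma compact_cover_np (A : set T) : compact A -> cover_compact A.
Proof. move=> cA; have : @compact pal A by exact: cA. by rewrite compact_cover. Qed.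
End PAlias.

Lemma pigeon (C : nat) (P : nat -> nat -> Prop) :
  (forall n m i, (n <= m)%N -> P m i -> P n i) ->
  (forall n, exists i, (i < C)%N /\ P n i) -> exists i, (i < C)%N /\ forall n, P n i.
Proof.
elim: C P => [|C IH] P Pmono H.
  by have [i [] ] := H 0%N.
have [allC|] := pselect (forall n, P n C); first by exists C.
move=> /existsNP [m nPm].
have H' : forall n, exists i, (i < C)%N /\ P (n + m)%N i.
  move=> n; have [i [iC Pi]] := H (n + m)%N; exists i; split=> //.
  rewrite ltnS leq_eqVlt in iC; case/orP: iC => // /eqP ei; subst i.
  by exfalso; apply: nPm; apply: (Pmono _ (n+m)%N) => //; rewrite leq_addl.
have M' : forall n k i, (n <= k)%N -> P (k + m)%N i -> P (n + m)%N i.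
  by move=> n k i nk; apply: Pmono; rewrite leq_add2r.
have [i [iC Pi]] := IH (fun n i => P (n + m)%N i) M' H'.
exists i; split; first by apply: ltnW.
by move=> n; apply: (Pmono _ (n + m)%N) => //; rewrite leq_addr.
Qed.

Lemma closure_Beps (R : realType) (X : metricType R) (e : R) (Q : set X) :
  0 < e -> closure (Beps (e/2) Q) `<=` Beps e Q.
Proof.
move=> e0 z /(_ (ball z (e/2)) (nbhsx_ballx _ _ (divr_gt0 e0 (ltr0Sn _ 1)))) [z' [[q Qq dq] bz]].
exists q => //; rewrite ballEmdist /= in bz.
rewrite (splitr e); apply: le_lt_trans (metric_triangle z z' q) _.
by rewrite ltrD.
Qed.

Lemma phi_cont (R : realType) (X U : metricType R) (F : X -> U -> X)
  (hphi : continuous (fun p : nat * X * {ptws nat -> U} => phi F p.1.1 p.1.2 p.2))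
  k y : continuous (fun w : {ptws nat -> U} => phi F k y w).
Proof.
move=> w.
apply: (@continuous_comp _ _ _ (fun w : {ptws nat -> U} => ((k, y), w))
  (fun p : nat * X * {ptws nat -> U} => phi F p.1.1 p.1.2 p.2)); last exact: hphi.
exact: (@cvg_pair _ _ _ (nbhs w) (nbhs (k,y)) (nbhs w) _ _ _ (fun=> (k,y)) id (cvg_cst _) cvg_id).
Qed.

Lemma compact_big (R : realType) (U : metricType R) (hU : compact [set: U]) :
  compact [set: {ptws nat -> {ptws nat -> U}}].
Proof.
have h1 : compact [set: {ptws nat -> U}].
  have := @tychonoff nat (fun _ => U) (fun _ => setT) (fun _ => hU).
  by rewrite (_ : [set f | _] = setT) //; apply/seteqP; split.
have := @tychonoff nat (fun _ => {ptws nat -> U}) (fun _ => setT) (fun _ => h1).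
by rewrite (_ : [set f | _] = setT) //; apply/seteqP; split.
Qed.

Lemma proj_cont (R : realType) (U : metricType R) (i : nat) :
  continuous (fun W : {ptws nat -> {ptws nat -> U}} => W i).
Proof. exact: (@proj_continuous nat (fun _ => {ptws nat -> U}) i). Qed.

Lemma rev_dir (R : realType) (X U : metricType R) (F : X -> U -> X)
  (hU : compact [set: U])
  (hphi : continuous (fun p : nat * X * {ptws nat -> U} => phi F p.1.1 p.1.2 p.2))
  (Q : set X) (hQ0 : Q !=set0) :
  bounded_inv_complexity F Q -> fin_equi_inv F Q.
Proof.
move=> hB x Qx; split=> // eps eps0.
set e2 := eps / 2.
have e20 : 0 < e2 by rewrite divr_gt0 // (ltr0Sn _ 1).
have [C hC] := hB e2 e20.
have hG : forall n, exists g : nat -> (nat -> U), forall y, Q y ->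
    exists i, (i < C)%N /\ forall k, (k < n.+1)%N -> Beps e2 Q (phi F k y (g i)).
  move=> n; have [S [Sspan Scard]] := hC n.+1 isT.
  have [y0 Qy0] := hQ0.
  have [w0 Sw0 _] : (\bigcup_(w in S) Qnw F Q n.+1 e2 w) y0 by rewrite -Sspan.
  have /ocard_geP/surjPex [f fsurj] := Scard.
  exists (fun i => odflt w0 (f i)) => y Qy.
  have [w Sw [_ Hw]] : (\bigcup_(w in S) Qnw F Q n.+1 e2 w) y by rewrite -Sspan.
  have [i Ii fi] := fsurj (Some w) (ex_intro2 _ _ w Sw erefl).
  by exists i; split; [exact: Ii | rewrite fi].
have [G hG'] := choice hG.
pose A n := [set W : {ptws nat -> {ptws nat -> U}} | forall y, Q y ->
   exists i, (i < C)%N /\ forall k, (k < n.+1)%N -> closure (Beps e2 Q) (phi F k y (W i))].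
have Acl n : closed (A n).
  have -> : A n = \bigcap_(y in Q) \bigcup_(i in `I_C) \bigcap_(k in `I_n.+1)
      ((fun W : {ptws nat -> {ptws nat -> U}} => W i) @^-1`
        ((fun w : {ptws nat -> U} => phi F k y w) @^-1` closure (Beps e2 Q))).
    apply/seteqP; split => W /=.
      move=> HW y Qy; have [i [iC Hi]] := HW y Qy; exists i => //.
    move=> HW y Qy; have [i iC Hi] := HW y Qy; exists i; split => //.
  apply: closed_bigI => y Qy; apply: closed_bigcup; first exact: finite_II.
  move=> i _; apply: closed_bigI => k _.
  apply: preimage_closed; first by move=> W _; exact: proj_cont.
  apply: preimage_closed; first by move=> w _; exact: phi_cont.
  exact: closed_closure.
have AG n : A n (G n).
  move=> y Qy; have [i [iC Hi]] := hG' n y Qy; exists i; split => // k kn.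
  by apply: subset_closure; exact: Hi.
have Amono n m : (n <= m)%N -> A m `<=` A n.
  move=> nm W HW y Qy; have [i [iC Hi]] := HW y Qy; exists i; split => // k kn.
  by apply: Hi; apply: leq_trans kn _.
pose FF := filter_from setT A.
have FFf : Filter FF.
  apply: filter_from_filter; first by exists 0%N.
  move=> i j _ _; exists (maxn i j) => //.
  by move=> W HW; split; apply: (Amono _ (maxn i j)) => //; rewrite ?leq_maxl ?leq_maxr.
have FFp : ProperFilter FF.
  by apply: filter_from_proper => n _; exists (G n).
have FT : FF setT by exists 0%N.
have [W [_ clW]] := @compact_big R U hU FF FFp FT.
rewrite clusterE in clW.
have AW n : A n W.
  rewrite (closure_id (A n)).1; last exact: Acl.
  by apply: clW; exists n.
have hy : forall y, Q y -> exists i, (i < C)%N /\ forall k, closure (Beps e2 Q) (phi F k y (W i)).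
  move=> y Qy.
  have [i [iC Hi]] := @pigeon C (fun n i => forall k, (k < n.+1)%N ->
     closure (Beps e2 Q) (phi F k y (W i)))
     (fun n m i nm H k kn => H k (leq_trans kn (nm : (n.+1 <= m.+1)%N))) (fun n => AW n y Qy).
  exists i; split; first exact: iC.
  move=> j; exact: (Hi j j (ltnSn j)).
exists 1; split => //.
exists (W @` `I_C); split; first exact: finite_image (finite_II C).
move=> y _ Qy; have [i [iC Hi]] := hy y Qy.
exists (W i); first by exists i.
by move=> k; exact: (@closure_Beps R X eps Q eps0 _ (Hi k)).
Qed.

Lemma fwd_dir (R : realType) (X U : metricType R) (F : X -> U -> X)
  (Q : set X) (hQ0 : Q !=set0) (hQ : compact Q) :
  fin_equi_inv F Q -> bounded_inv_complexity F Q.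
Proof.
move=> hfe eps eps0.
have hx : forall x, exists p : R * set (nat -> U), Q x -> 0 < p.1 /\ finite_set p.2 /\
    forall y, mdist x y < p.1 -> Q y -> exists2 w, p.2 w & forall k, Beps eps Q (phi F k y w).
  move=> x; case: (pselect (Q x)) => Qx; last by exists (1, set0).
  have [_ /(_ eps eps0) [d [d0 [Fs [fFs H]]]]] := hfe x Qx.
  by exists (d, Fs).
have [pp hpp] := choice hx.
have [x0 Qx0] := hQ0.
have cc := @compact_cover_np X x0 Q hQ.
have covQ : Q `<=` cover Q (fun x => interior (ball x (pp x).1)).
  move=> x Qx; exists x => //; have [d0 _] := hpp x Qx.
  exact: nbhsx_ballx.
have [D' D'Q cov] := cc X Q (fun x => interior (ball x (pp x).1)) (fun x _ => @open_interior _ _) covQ.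
pose S := bigcup [set` D'] (fun x : X => (pp x).2).
have Sfin : finite_set S.
  apply: bigcup_finite; first exact: finite_fset.
  move=> x Dx; have := D'Q x Dx; rewrite in_setE => Qx.
  by have [_ [? _]] := hpp x Qx.
have [C hC] := (finite_set_leP S).1 Sfin.
exists C => n _; exists S; split => //.
apply/seteqP; split => [y Qy|y [w _ []] //].
have [x Dx hxy] := cov y Qy.
have := D'Q x Dx; rewrite in_setE => Qx.
have [_ [_ H]] := hpp x Qx.
have : ball x (pp x).1 y by apply: interior_subset.
rewrite ballEmdist /= => dxy.
have [w Fw Hw] := H y dxy Qy.
exists w; first by exists x.
by split => // k _; exact: Hw k.
Qed.

Theorem mainTheorem1 (R : realType) (X U : metricType R)
  (F : X -> U -> X)
  (hU : compact [set: U])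
  (hF : forall u : U, continuous (fun x : X => F x u))
  (hphi : continuous (fun p : nat * X * {ptws nat -> U} => phi F p.1.1 p.1.2 p.2))
  (Q : set X) (hQ0 : Q !=set0) (hQ : compact Q) :
  fin_equi_inv F Q <-> bounded_inv_complexity F Q.
Proof.
split; [exact: fwd_dir | exact: rev_dir].
Qed.
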